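(* Let $\Gamma_1,\Gamma_2$ be propositional theories over $\mathcal L$ and let $e\in\{c,a,s,u\}$. Then the following are equivalent: (1) $\Gamma_1\equiv_e\Gamma_2$; (2) $C_e(\Gamma_1)=C_e(\Gamma_2)$; (3) $E_e(\Gamma_1)=E_e(\Gamma_2)$.
   Context: A propositional signature $\mathcal L$ is a set of atoms. Formulas are built from atoms and $\bot$ using $\wedge,\vee,\to$; $\neg\phi$ abbreviates $\phi\to\bot$. A theory is a set of formulas. An HT-interpretation over $\mathcal L$ is a pair $(X,Y)$ with $X\subseteq Y\subseteq\mathcal L$; it is total if $X=Y$. $Y\models\phi$ denotes classical satisfaction. HT-satisfaction: $(X,Y)\models a$ iff $a\in X$ for an atom $a$; $(X,Y)\not\models\bot$; $\wedge,\vee$ componentwise; $(X,Y)\models\phi\to\psi$ iff (i) $(X,Y)\not\models\phi$ or $(X,Y)\models\psi$, and (ii) $Y\models\phi\to\psi$. $(X,Y)\models\Gamma$ iff it satisfies every formula of $\Gamma$. A total $(Y,Y)$ is an equilibrium model of $\Gamma$ iff $(Y,Y)\models\Gamma$ and $(X,Y)\not\models\Gamma$ for all $X\subsetneq Y$; then $Y$ is an answer set of $\Gamma$. A formula is factual if it is built from atoms and $\bot$ using only $\wedge,\vee$ and implications of the form $\phi\to\bot$. For theories $\Gamma_1,\Gamma_2$ over $\mathcal L$: $\Gamma_1\equiv_c\Gamma_2$ iff they have the same classical models; $\Gamma_1\equiv_a\Gamma_2$ iff they have the same answer sets; $\Gamma_1\equiv_s\Gamma_2$ iff for every $\mathcal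 L'\supseteq\mathcal L$ and every theory $\Gamma$ over $\mathcal L'$, $\Gamma_1\cup\Gamma$ and $\Gamma_2\cup\Gamma$ have the same answer sets; $\Gamma_1\equiv_u\Gamma_2$ iff the same holds for every factual theory $\Gamma$ over every $\mathcal L'\supseteq\mathcal L$. $C_s(\Gamma)$ is the set of HT-countermodels of $\Gamma$ (HT-interpretations over $\mathcal L$ not satisfying $\Gamma$). A here-countermodel is an HT-countermodel $(X,Y)$ with $Y\models\Gamma$; $E_s(\Gamma)$ is the set of equivalence interpretations, i.e. total HT-models of $\Gamma$ together with here-countermodels of $\Gamma$. For a set $S$ of HT-interpretations: a total $(Y,Y)$ is total-closed in $S$ if $(X,Y)\in S$ for every $X\subseteq Y$; $(X,Y)$ is closed in $S$ if $(X',Y)\in S$ for every $X\subseteq X'\subseteq Y$; $(X,Y)$ is there-closed in $S$ if $(Y,Y)\notin S$ and $(X',Y)\in S$ for every $X\subseteq X'\subsetneq Y$. Define: $C_c(\Gamma)$, $E_c(\Gamma)$ = the total interpretations in $C_s(\Gamma)$, resp. $E_s(\Gamma)$; $C_a(\Gamma)$ = the set of HT-interpretations of the form $(\emptyset,Y)$ that are there-closed in $C_s(\Gamma)$; $E_a(\Gamma)$ = the set of total interpretations that are total-closed in $E_s(\Gamma)$; $C_u(\Gamma)$ = the set of HT-interpretations that are there-closed in $C_s(\Gamma)$; $E_u(\Gamma)$ = the set of HT-interpretations that are closed in $E_s(\Gamma)$. *)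

(* Defs.v *)
From Stdlib Require Import Classical.

Set Implicit Arguments.

Definition aset (A : Type) := A -> Prop.
Definition subset {A : Type} (X Y : aset A) : Prop := forall a, X a -> Y a.
Definition psubset {A : Type} (X Y : aset A) : Prop := subset X Y /\ ~ subset Y X.
Definition same {A : Type} (X Y : aset A) : Prop := forall a, X a <-> Y a.

Inductive form (A : Type) : Type :=
| Atom : A -> form A
| Bot : form A
| And : form A -> form A -> form A
| Or : form A -> form A -> form A
| Imp : form A -> form A -> form A.
Arguments Bot {A}.

Definition Neg {A : Type} (p : form A) : form A := Imp p Bot.

Definition theory (A : Type) := form A -> Prop.
Definition tunion {A : Type} (G1 G2 : theory A) : theory A :=
  fun p => G1 p \/ G2 p.

Fixpoint form_over {A : Type} (L : aset A) (p : form A) : Prop :=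
  match p with
  | Atom a => L a
  | Bot => True
  | And p q | Or p q | Imp p q => form_over L p /\ form_over L q
  end.
Definition theory_over {A : Type} (L : aset A) (G : theory A) : Prop :=
  forall p, G p -> form_over L p.

Inductive factual {A : Type} : form A -> Prop :=
| fact_atom : forall a, factual (Atom a)
| fact_bot : factual Bot
| fact_and : forall p q, factual p -> factual q -> factual (And p q)
| fact_or : forall p q, factual p -> factual q -> factual (Or p q)
| fact_neg : forall p, factual p -> factual (Imp p Bot).
Definition factual_theory {A : Type} (G : theory A) : Prop :=
  forall p, G p -> factual p.

Fixpoint csat {A : Type} (Y : aset A) (p : form A) : Prop :=
  match p with
  | Atom a => Y a
  | Bot => False
  | And p q => csat Y p /\ csat Y q
  | Or p q => csat Y p \/ csat Y q
  | Imp p q => csat Y p -> csat Y q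
  end.
Definition cmodel {A : Type} (G : theory A) (Y : aset A) : Prop :=
  forall p, G p -> csat Y p.

Fixpoint htsat {A : Type} (X Y : aset A) (p : form A) : Prop :=
  match p with
  | Atom a => X a
  | Bot => False
  | And p q => htsat X Y p /\ htsat X Y q
  | Or p q => htsat X Y p \/ htsat X Y q
  | Imp p q => (htsat X Y p -> htsat X Y q) /\ csat Y (Imp p q)
  end.
Definition htmodel {A : Type} (G : theory A) (X Y : aset A) : Prop :=
  forall p, G p -> htsat X Y p.

Definition interp_over {A : Type} (L : aset A) (X Y : aset A) : Prop :=
  subset X Y /\ subset Y L.
Definition total {A : Type} (X Y : aset A) : Prop := same X Y.

Definition answer_set {A : Type} (L : aset A) (G : theory A) (Y : aset A) : Prop :=
  subset Y L /\ htmodel G Y Y /\ (forall X, psubset X Y -> ~ htmodel G X Y).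

Definition same_answer_sets {A : Type} (L : aset A) (G1 G2 : theory A) : Prop :=
  forall Y, answer_set L G1 Y <-> answer_set L G2 Y.

Inductive ekind := Kc | Ka | Ks | Ku.

Definition equiv_c {A : Type} (L : aset A) (G1 G2 : theory A) : Prop :=
  forall Y, subset Y L -> (cmodel G1 Y <-> cmodel G2 Y).
Definition equiv_a {A : Type} (L : aset A) (G1 G2 : theory A) : Prop :=
  same_answer_sets L G1 G2.
Definition equiv_s {A : Type} (L : aset A) (G1 G2 : theory A) : Prop :=
  forall L' : aset A, subset L L' -> forall G : theory A, theory_over L' G ->
    same_answer_sets L' (tunion G1 G) (tunion G2 G).
Definition equiv_u {A : Type} (L : aset A) (G1 G2 : theory A) : Prop :=
  forall L' : aset A, subset L L' -> forall G : theory A, theory_over L' G ->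
    factual_theory G ->
    same_answer_sets L' (tunion G1 G) (tunion G2 G).

Definition equiv (e : ekind) {A : Type} (L : aset A) (G1 G2 : theory A) : Prop :=
  match e with
  | Kc => equiv_c L G1 G2
  | Ka => equiv_a L G1 G2
  | Ks => equiv_s L G1 G2
  | Ku => equiv_u L G1 G2
  end.

Definition htset (A : Type) := aset A -> aset A -> Prop.
Definition same_htset {A : Type} (S1 S2 : htset A) : Prop :=
  forall X Y, S1 X Y <-> S2 X Y.

Definition total_closed {A : Type} (S : htset A) (Y : aset A) : Prop :=
  forall X, subset X Y -> S X Y.
Definition closed_in {A : Type} (S : htset A) (X Y : aset A) : Prop :=
  forall X', subset X X' -> subset X' Y -> S X' Y.
Definition there_closed {A : Type} (S : htset A) (X Y : aset A) : Prop :=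
  ~ S Y Y /\ (forall X', subset X X' -> psubset X' Y -> S X' Y).

Definition Cs_set {A : Type} (L : aset A) (G : theory A) : htset A :=
  fun X Y => interp_over L X Y /\ ~ htmodel G X Y.
Definition Es_set {A : Type} (L : aset A) (G : theory A) : htset A :=
  fun X Y => interp_over L X Y /\
    ((total X Y /\ htmodel G X Y) \/ (cmodel G Y /\ ~ htmodel G X Y)).

Definition Cset (e : ekind) {A : Type} (L : aset A) (G : theory A) : htset A :=
  match e with
  | Kc => fun X Y => Cs_set L G X Y /\ total X Y
  | Ka => fun X Y => interp_over L X Y /\ (forall a, ~ X a) /\
                     there_closed (Cs_set L G) X Y
  | Ks => Cs_set L G
  | Ku => fun X Y => interp_over L X Y /\ there_closed (Cs_set L G) X Y
  end.

Definition Eset (e : ekind) {A : Type} (L : aset A) (G : theory A) : htset A :=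
  match e with
  | Kc => fun X Y => Es_set L G X Y /\ total X Y
  | Ka => fun X Y => interp_over L X Y /\ total X Y /\ total_closed (Es_set L G) Y
  | Ks => Es_set L G
  | Ku => fun X Y => interp_over L X Y /\ closed_in (Es_set L G) X Y
  end.

(* Main.v *)
Require Import Defs.
From Stdlib Require Import Classical.

Section SBasic.
Context {A : Type}.
Implicit Types (X Y Z : aset A) (p : form A) (G : theory A).

Lemma csat_ext p Y Y' : same Y Y' -> (csat Y p <-> csat Y' p).
Proof. intro H; induction p; simpl; firstorder. Qed.

Lemma htsat_ext p X X' Y Y' : same X X' -> same Y Y' ->
  (htsat X Y p <-> htsat X' Y' p).
Proof.
  intros HX HY; induction p; simpl; try firstorder.
  all: pose proof (csat_ext p1 _ _ HY); pose proof (csat_ext p2 _ _ HY); tauto.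
Qed.

Lemma htmodel_ext G X X' Y Y' : same X X' -> same Y Y' ->
  (htmodel G X Y <-> htmodel G X' Y').
Proof.
  intros HX HY; unfold htmodel; split; intros H p Hp;
  pose proof (htsat_ext p _ _ _ _ HX HY); firstorder.
Qed.

Lemma persist p X Y : subset X Y -> htsat X Y p -> csat Y p.
Proof. intro S; induction p; simpl; firstorder. Qed.

Lemma htsat_YY p Y : htsat Y Y p <-> csat Y p.
Proof. induction p; simpl; tauto. Qed.

Lemma htmodel_YY G Y : htmodel G Y Y <-> cmodel G Y.
Proof. unfold htmodel, cmodel; split; intros H p Hp; apply htsat_YY; auto.
Qed.

Lemma htmodel_cmodel G X Y : subset X Y -> htmodel G X Y -> cmodel G Y.
Proof. intros S H p Hp; eapply persist; eauto. Qed.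

Definition restr (L X : aset A) : aset A := fun a => X a /\ L a.

Lemma csat_restr L p Y : form_over L p -> (csat Y p <-> csat (restr L Y) p).
Proof. unfold restr; induction p; simpl; intros; try tauto; firstorder. Qed.

Lemma htsat_restr L p X Y : form_over L p ->
  (htsat X Y p <-> htsat (restr L X) (restr L Y) p).
Proof.
  induction p; simpl; intros Hf; unfold restr in *; try tauto; try firstorder.
  all: pose proof (csat_restr L p1 Y H); pose proof (csat_restr L p2 Y H0);
       unfold restr in *; tauto.
Qed.

Lemma htmodel_restr L G X Y : theory_over L G ->
  (htmodel G X Y <-> htmodel G (restr L X) (restr L Y)).
Proof.
  intros HG; unfold htmodel; split; intros H p Hp;
  pose proof (htsat_restr L p X Y (HG p Hp)); firstorder.
Qed.

Lemma cmodel_restr L G Y : theory_over L G ->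
  (cmodel G Y <-> cmodel G (restr L Y)).
Proof.
  intros HG; unfold cmodel; split; intros H p Hp;
  pose proof (csat_restr L p Y (HG p Hp)); firstorder.
Qed.

Lemma factual_mono p X X' Y : factual p -> subset X X' -> subset X' Y ->
  htsat X Y p -> htsat X' Y p.
Proof.
  intros F S1 S2; induction F; simpl; try firstorder.
  apply H0. eapply persist; eauto.
Qed.

End SBasic.

Section SP2.
Context {A : Type}.
Implicit Types (X Y Z : aset A) (p : form A) (G : theory A) (L : aset A).

Lemma same_refl X : same X X. Proof. intro; tauto. Qed.
Lemma same_sym X Y : same X Y -> same Y X. Proof. intros H a; firstorder. Qed.

Lemma ht_same G X Y : same X Y -> (htmodel G X Y <-> cmodel G Y).
Proof. intro H. rewrite (htmodel_ext G X Y Y Y H (same_refl Y)). apply htmodel_YY. Qed.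

Lemma not_same_psub X Y : subset X Y -> ~ same X Y -> psubset X Y.
Proof. intros S N; split; auto; intro S'; apply N; intro a; firstorder. Qed.

Lemma psub_not_same X Y : psubset X Y -> ~ same X Y.
Proof. intros [S N] H; apply N; intros a; firstorder. Qed.

Lemma CKc L G X Y : Cset Kc L G X Y <-> subset Y L /\ same X Y /\ ~ cmodel G Y.
Proof.
  simpl; unfold Cs_set, interp_over, total; split.
  - intros [[[S1 S2] Hn] Hs]. rewrite ht_same in Hn by auto. auto.
  - intros [S [Hs Hn]]. rewrite ht_same by auto. repeat split; auto.
    all: firstorder.
Qed.

Lemma EKc L G X Y : Eset Kc L G X Y <-> subset Y L /\ same X Y /\ cmodel G Y.
Proof.
  simpl; unfold Es_set, interp_over, total; split.
  - intros [[[S1 S2] Hn] Hs]. rewrite !ht_same in Hn by auto. tauto.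
  - intros [S [Hs Hn]]. rewrite !ht_same by auto. repeat split; auto.
    all: firstorder.
Qed.

Lemma case_c L G1 G2 :
  (equiv Kc L G1 G2 <-> same_htset (Cset Kc L G1) (Cset Kc L G2)) /\
  (equiv Kc L G1 G2 <-> same_htset (Eset Kc L G1) (Eset Kc L G2)).
Proof.
  cbv beta iota delta [equiv]; unfold equiv_c, same_htset; split; split.
  - intros H X Y; rewrite !CKc. split; intros [S [Hs Hn]]; rewrite (H Y S) in *; auto.
  - intros H Y S. pose proof (H Y Y) as HY; rewrite !CKc in HY.
    pose proof (same_refl Y). split; intro Hc; apply NNPP; intro Hn; firstorder.
  - intros H X Y; rewrite !EKc. split; intros [S [Hs Hn]]; rewrite (H Y S) in *; auto.
  - intros H Y S. pose proof (H Y Y) as HY; rewrite !EKc in HY.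
    pose proof (same_refl Y). firstorder.
Qed.

Lemma CKa L G X Y : Cset Ka L G X Y <-> (forall a, ~ X a) /\ answer_set L G Y.
Proof.
  simpl; unfold there_closed, Cs_set, interp_over, answer_set; split.
  - intros [[S1 S2] [E [HY HX]]]. split; auto. split; auto. split.
    + apply NNPP; intro N; apply HY; split; auto. split; auto. intros a; tauto.
    + intros Z HZ Hm. destruct (HX Z) as [_ Hn]; auto.
      intros a Ha; exfalso; eapply E; eauto.
  - intros [E [S [HY HX]]]. split. split; auto. intros a Ha; exfalso; eapply E; eauto.
    split; auto. split.
    + intros [_ N]; auto.
    + intros Z _ HZ. split; [|apply HX; auto]. destruct HZ; split; auto.
Qed.

Lemma EKa L G X Y : Eset Ka L G X Y <-> same X Y /\ answer_set L G Y.
Proof.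
  simpl; unfold total_closed, Es_set, interp_over, answer_set, total; split.
  - intros [[S1 S2] [Hs HC]]. split; auto. split; auto. split.
    + destruct (HC Y (fun a h => h)) as [_ [[_ Hm]|[Hc Hn]]]; auto.
      exfalso; apply Hn; apply htmodel_YY; auto.
    + intros Z HZ Hm. destruct (HC Z) as [_ [[Hs' _]|[_ Hn]]]; auto.
      destruct HZ; auto. apply (psub_not_same _ _ HZ); auto. 
  - intros [Hs [S [HY HX]]]. split. split; auto. intros a Ha; apply Hs; auto.
    split; auto. intros Z HZ. split. split; auto.
    destruct (classic (same Z Y)) as [E|E].
    + left; split; auto. rewrite ht_same by auto. apply htmodel_YY; auto.
    + right; split. apply htmodel_YY; auto. apply HX. apply not_same_psub; auto.
Qed.

Lemma case_a L G1 G2 :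
  (equiv Ka L G1 G2 <-> same_htset (Cset Ka L G1) (Cset Ka L G2)) /\
  (equiv Ka L G1 G2 <-> same_htset (Eset Ka L G1) (Eset Ka L G2)).
Proof.
  cbv beta iota delta [equiv]; unfold equiv_a, same_answer_sets, same_htset; split; split.
  - intros H X Y; rewrite !CKa, H; tauto.
  - intros H Y. pose proof (H (fun _ => False) Y) as HY; rewrite !CKa in HY.
    assert (forall a : A, ~ False) by auto. tauto.
  - intros H X Y; rewrite !EKa, H; tauto.
  - intros H Y. pose proof (H Y Y) as HY; rewrite !EKa in HY.
    pose proof (same_refl Y). tauto.
Qed.

End SP2.

Section SP3.
Context {A : Type}.
Implicit Types (X Y Z : aset A) (p : form A) (G : theory A) (L : aset A).

Definition facts X : theory A := fun p => exists a, X a /\ p = Atom a.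
Definition HTeq L G1 G2 := forall X Y, interp_over L X Y ->
  (htmodel G1 X Y <-> htmodel G2 X Y).

Lemma htmodel_union G1 G X Y :
  htmodel (tunion G1 G) X Y <-> htmodel G1 X Y /\ htmodel G X Y.
Proof. unfold htmodel, tunion; firstorder. Qed.

Lemma facts_model X Z Y : htmodel (facts X) Z Y <-> subset X Z.
Proof.
  unfold htmodel, facts; split.
  - intros H a Ha. apply (H (Atom a)). eauto.
  - intros H p [a [Ha ->]]; simpl; auto.
Qed.

Lemma facts_over L X : subset X L -> theory_over L (facts X).
Proof. intros S p [a [Ha ->]]; simpl; auto. Qed.

Lemma facts_factual X : factual_theory (facts X).
Proof. intros p [a [Ha ->]]; constructor. Qed.

Lemma answer_facts L G X Y : subset Y L -> cmodel G Y ->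
  (forall Z, subset X Z -> psubset Z Y -> ~ htmodel G Z Y) -> subset X Y ->
  answer_set L (tunion G (facts X)) Y.
Proof.
  intros S Hc HZ SX. split; auto. split.
  - apply htmodel_union; split. apply htmodel_YY; auto. apply facts_model; auto.
  - intros Z HP Hm. apply htmodel_union in Hm as [Hm Hf].
    apply facts_model in Hf. eapply HZ; eauto.
Qed.

Lemma Cs_same_iff L G1 G2 :
  same_htset (Cs_set L G1) (Cs_set L G2) <-> HTeq L G1 G2.
Proof.
  unfold same_htset, Cs_set, HTeq; split.
  - intros H X Y I. specialize (H X Y). split; intro Hm; apply NNPP; intro N; tauto.
  - intros H X Y. split; intros [I N]; split; auto; rewrite (H X Y I) in *; auto.
Qed.

Lemma Es_dir L G1 G2 : same_htset (Es_set L G1) (Es_set L G2) ->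
  forall X Y, interp_over L X Y -> htmodel G1 X Y -> htmodel G2 X Y.
Proof.
  unfold same_htset, Es_set, total; intros H X Y I Hm.
  destruct I as [S1 S2].
  assert (IY : interp_over L Y Y) by (split; auto; intros a h; auto).
  destruct (classic (same X Y)) as [E|E].
  - assert (E1 : Es_set L G1 X Y) by (split; [split; auto| left; auto]).
    destruct (proj1 (H X Y) E1) as [_ [[_ Hm2]|[Hc Hn]]]; auto.
    + exfalso; apply Hn. apply ht_same; auto.
  - apply NNPP; intro N.
    assert (HY2 : cmodel G2 Y).
    { assert (E1 : Es_set L G1 Y Y).
      { split; auto. left; split. apply same_refl. apply htmodel_YY. eapply htmodel_cmodel; eauto. }
      destruct (proj1 (H Y Y) E1) as [_ [[_ Hm2]|[Hc Hn]]]; auto.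
      apply htmodel_YY; auto. }
    assert (E2 : Es_set L G2 X Y) by (split; [split; auto| right; auto]).
    destruct (proj2 (H X Y) E2) as [_ [[E' _]|[_ Hn]]]; auto.
Qed.

Lemma HT_Es L G1 G2 : HTeq L G1 G2 -> same_htset (Es_set L G1) (Es_set L G2).
Proof.
  unfold same_htset, Es_set, HTeq; intros H X Y.
  split; intros [I D]; split; auto;
  assert (IY : interp_over L Y Y) by (destruct I; split; auto; intros a h; auto);
  rewrite <- !htmodel_YY in *; rewrite (H X Y I) in *; rewrite (H Y Y IY) in *; auto.
Qed.

Lemma s_transfer L G1 G2 X Y : theory_over L G1 -> theory_over L G2 ->
  HTeq L G1 G2 -> subset X Y -> (htmodel G1 X Y <-> htmodel G2 X Y).
Proof.
  intros T1 T2 H S. rewrite (htmodel_restr L G1 X Y T1), (htmodel_restr L G2 X Y T2).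
  apply H. split; intros a [h1 h2]; unfold restr; auto.
Qed.

Lemma HT_equiv_s L G1 G2 : theory_over L G1 -> theory_over L G2 ->
  HTeq L G1 G2 -> equiv_s L G1 G2.
Proof.
  intros T1 T2 H L' SL G TG Y.
  assert (K : forall X, subset X Y -> (htmodel (tunion G1 G) X Y <-> htmodel (tunion G2 G) X Y)).
  { intros X S; rewrite !htmodel_union, (s_transfer L G1 G2 X Y); tauto. }
  assert (SY : subset Y Y) by (intros a h; auto).
  unfold answer_set. split; intros [S [M N]]; split; auto; split.
  - apply K; auto.
  - intros X HP; specialize (N X HP); rewrite K in N; auto; destruct HP; auto.
  - apply K; auto.
  - intros X HP; specialize (N X HP); rewrite <- K in N; auto; destruct HP; auto.
Qed.

End SP3.

Section SP4.
Context {A : Type}.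
Implicit Types (X Y Z : aset A) (p : form A) (G : theory A) (L : aset A).

Definition IM X Y : theory A := fun p => exists a b, Y a /\ ~ X a /\ Y b /\ ~ X b /\
  p = Imp (Atom a) (Atom b).

Lemma equiv_s_sym L G1 G2 : equiv_s L G1 G2 -> equiv_s L G2 G1.
Proof. intros H L' S G T Y. specialize (H L' S G T Y). tauto. Qed.

Lemma equiv_s_dir L G1 G2 : equiv_s L G1 G2 ->
  forall X Y, interp_over L X Y -> htmodel G1 X Y -> htmodel G2 X Y.
Proof.
  intros H X Y [SX SY] Hm. apply NNPP; intro N.
  assert (SYY : subset Y Y) by (intros a h; auto).
  assert (C1 : cmodel G1 Y) by exact (htmodel_cmodel G1 X Y SX Hm).
  destruct (classic (cmodel G2 Y)) as [C2|C2].
  - set (GG := tunion (facts X) (IM X Y)).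
    assert (TG : theory_over L GG).
    { intros p [Hp|[a [b [ya [_ [yb [_ ->]]]]]]].
      - apply (facts_over L X); auto. intros a h; auto.
      - simpl; auto. }
    assert (AS2 : answer_set L (tunion G2 GG) Y).
    { split; auto. split.
      - apply htmodel_union; split. apply htmodel_YY; auto.
        intros p [Hp|[a [b [ya [_ [yb [_ ->]]]]]]].
        + destruct Hp as [a [xa ->]]; simpl; auto.
        + simpl; auto.
      - intros Z [SZ NZ] Hz. apply htmodel_union in Hz as [Hz HG].
        assert (XZ : subset X Z) by (intros a xa; apply (HG (Atom a)); left; exists a; auto).
        destruct (classic (exists a, Y a /\ ~ X a /\ Z a)) as [[a [ya [nxa za]]]|NE].
        + apply NZ; intros b yb. destruct (classic (X b)) as [xb|nxb]; auto.
          assert (Hi : htsat Z Y (Imp (Atom a) (Atom b))).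
          { apply HG; right; exists a, b; auto. }
          simpl in Hi; apply Hi; auto.
        + apply N. apply (htmodel_ext G2 Z X Y Y).
          * intro a; split; auto. intro za. apply NNPP; intro nxa. apply NE; exists a; auto.
          * apply same_refl.
          * auto. }
    apply (H L (fun a h => h) GG TG Y) in AS2.
    destruct AS2 as [_ [_ Nm]]. apply (Nm X).
    + split; auto. intro YX. apply N. apply ht_same. intro a; split; auto. auto.
    + apply htmodel_union; split; auto.
      intros p [Hp|[a [b [ya [nxa [yb [_ ->]]]]]]].
      * destruct Hp as [c [xc ->]]; simpl; auto.
      * simpl. split; intros; tauto.
  - assert (AS1 : answer_set L (tunion G1 (facts Y)) Y).
    { apply answer_facts; auto. intros Z YZ [_ NZ]; tauto. }
    apply (H L (fun a h => h) (facts Y) (facts_over L Y SY) Y) in AS1.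
    destruct AS1 as [_ [M _]]. apply htmodel_union in M as [M _].
    apply C2, htmodel_YY; auto.
Qed.

Lemma case_s L G1 G2 : theory_over L G1 -> theory_over L G2 ->
  (equiv Ks L G1 G2 <-> same_htset (Cset Ks L G1) (Cset Ks L G2)) /\
  (equiv Ks L G1 G2 <-> same_htset (Eset Ks L G1) (Eset Ks L G2)).
Proof.
  intros T1 T2.
  assert (K : equiv_s L G1 G2 <-> HTeq L G1 G2).
  { split.
    - intros H X Y I; split. apply (equiv_s_dir L G1 G2 H); auto.
      apply (equiv_s_dir L G2 G1 (equiv_s_sym L G1 G2 H)); auto.
    - apply HT_equiv_s; auto. }
  cbv beta iota delta [equiv Cset Eset]. rewrite K, Cs_same_iff. split; [tauto|].
  split. apply HT_Es. intros H X Y I; split.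
  apply (Es_dir L G1 G2 H); auto.
  apply (Es_dir L G2 G1); auto. intros U V; specialize (H U V); tauto.
Qed.

End SP4.

Section SP5.
Context {A : Type}.
Implicit Types (X Y Z : aset A) (p : form A) (G : theory A) (L : aset A).

Definition UEm L G X Y := interp_over L X Y /\ cmodel G Y /\
  (forall Z, subset X Z -> psubset Z Y -> ~ htmodel G Z Y).

Lemma CKu L G X Y : Cset Ku L G X Y <-> UEm L G X Y.
Proof.
  simpl; unfold UEm, there_closed, Cs_set; split.
  - intros [[SX SY] [NY HZ]]. split; [split; auto|]. split.
    + apply htmodel_YY. apply NNPP; intro N; apply NY; split; auto.
      split; auto. intros a h; auto.
    + intros Z XZ PZ. apply HZ; auto.
  - intros [[SX SY] [C HZ]]. split; [split; auto|]. split.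
    + intros [_ N]; apply N, htmodel_YY; auto.
    + intros Z XZ PZ. split. destruct PZ; split; auto. apply HZ; auto.
Qed.

Lemma EKu L G X Y : Eset Ku L G X Y <-> UEm L G X Y.
Proof.
  simpl; unfold UEm, closed_in, Es_set, total; split.
  - intros [[SX SY] HC]. split; [split; auto|]. split.
    + destruct (HC Y SX (fun a h => h)) as [_ [[_ M]|[C _]]]; auto.
      apply htmodel_YY; auto.
    + intros Z XZ PZ. destruct (HC Z XZ (proj1 PZ)) as [_ [[E _]|[_ M]]]; auto.
      exfalso; apply (psub_not_same Z Y PZ E).
  - intros [[SX SY] [C HZ]]. split; [split; auto|]. intros Z XZ ZY.
    split; [split; auto|].
    destruct (classic (same Z Y)) as [E|E].
    + left; split; auto. apply ht_same; auto.
    + right; split; auto. apply HZ; auto. apply not_same_psub; auto.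
Qed.

Lemma equiv_u_sym L G1 G2 : equiv_u L G1 G2 -> equiv_u L G2 G1.
Proof. intros H L' S G T F Y. specialize (H L' S G T F Y). tauto. Qed.

Lemma u_fwd L G1 G2 : equiv_u L G1 G2 -> forall X Y, UEm L G1 X Y -> UEm L G2 X Y.
Proof.
  intros H X Y [[SX SY] [C HZ]].
  assert (K : forall W, subset X W -> subset W Y -> answer_set L (tunion G2 (facts W)) Y).
  { intros W XW WY. apply (H L (fun a h => h) (facts W)).
    - apply facts_over. intros a h; auto.
    - apply facts_factual.
    - apply answer_facts; auto. intros Z WZ PZ. apply HZ; auto.
      intros a h; auto. }
  split; [split; auto|]. split.
  - destruct (K Y SX (fun a h => h)) as [_ [M _]].
    apply htmodel_union in M as [M _]. apply htmodel_YY; auto.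
  - intros Z XZ PZ M. destruct (K Z XZ (proj1 PZ)) as [_ [_ N]].
    apply (N Z PZ). apply htmodel_union; split; auto. apply facts_model; intros a h; auto.
Qed.

Lemma u_bwd L G1 G2 : theory_over L G1 -> theory_over L G2 ->
  (forall X Y, UEm L G1 X Y -> UEm L G2 X Y) ->
  forall L' G, subset L L' -> factual_theory G -> forall Y,
  answer_set L' (tunion G1 G) Y -> answer_set L' (tunion G2 G) Y.
Proof.
  intros T1 T2 H L' G SL F Y [SY [M N]].
  apply htmodel_union in M as [M1 MG].
  assert (IYL : interp_over L (restr L Y) (restr L Y)).
  { split; intros a h; auto. destruct h; auto. }
  assert (C1 : cmodel G1 (restr L Y)).
  { apply cmodel_restr; auto. apply htmodel_YY; auto. }
  assert (U1 : UEm L G1 (restr L Y) (restr L Y)).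
  { split; auto. split; auto. intros Z YZ [ZY NZ]. exfalso; auto. }
  destruct (H _ _ U1) as [_ [C2 _]].
  split; auto. split.
  - apply htmodel_union; split; auto. apply htmodel_YY. apply (cmodel_restr L); auto.
  - intros X [XY NX] Mx. apply htmodel_union in Mx as [Mx2 MxG].
    destruct (classic (subset (restr L Y) (restr L X))) as [YX|YX].
    + apply (N X). split; auto. apply htmodel_union; split; auto.
      apply (htmodel_restr L); auto. 
      apply (htmodel_ext G1 (restr L X) (restr L Y) (restr L Y) (restr L Y)).
      * intro a; split; auto. intros [xa la]; split; auto.
      * apply same_refl.
      * apply htmodel_YY; auto.
    + assert (NU : ~ UEm L G1 (restr L X) (restr L Y)).
      { intro U. destruct (H _ _ U) as [_ [_ HZ]]. apply (HZ (restr L X)).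
        - intros a h; auto.
        - split. intros a [xa la]; split; auto. auto.
        - apply (htmodel_restr L) in Mx2; auto. }
      assert (IXL : interp_over L (restr L X) (restr L Y)).
      { split; intros a [h1 h2]; [split|]; auto. }
      assert (EX : exists Z, subset (restr L X) Z /\ psubset Z (restr L Y) /\ htmodel G1 Z (restr L Y)).
      { apply NNPP; intro NE. apply NU. split; auto. split; auto.
        intros Z XZ PZ MZ. apply NE; exists Z; auto. }
      destruct EX as [Z [XZ [[ZY ZN] MZ]]].
      set (X' := fun a => X a \/ Z a).
      assert (X'Y : subset X' Y).
      { intros a [h|h]; auto. apply ZY in h; destruct h; auto. }
      apply (N X').
      * split; auto. intro YX'. apply ZN. intros a [ya la].
        destruct (YX' a ya) as [xa|za]; auto. apply XZ; split; auto.
      * apply htmodel_union; split.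
        -- apply (htmodel_restr L); auto. 
           apply (htmodel_ext G1 Z (restr L X') (restr L Y) (restr L Y)); auto.
           ++ intro a; split.
              ** intro za; split. right; auto. apply ZY in za; destruct za; auto.
              ** intros [[xa|za] la]; auto. apply XZ; split; auto.
           ++ apply same_refl.
        -- intros p Hp. apply (factual_mono p X X' Y); auto.
           intros a h; left; auto.
Qed.

Lemma case_u L G1 G2 : theory_over L G1 -> theory_over L G2 ->
  (equiv Ku L G1 G2 <-> same_htset (Cset Ku L G1) (Cset Ku L G2)) /\
  (equiv Ku L G1 G2 <-> same_htset (Eset Ku L G1) (Eset Ku L G2)).
Proof.
  intros T1 T2.
  assert (K : equiv_u L G1 G2 <-> (forall X Y, UEm L G1 X Y <-> UEm L G2 X Y)).
  { split.
    - intros H X Y; split. apply (u_fwd L G1 G2 H).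
      apply (u_fwd L G2 G1 (equiv_u_sym L G1 G2 H)).
    - intros H L' SL G TG F Y; split.
      + apply (u_bwd L G1 G2); auto. intros X Z; apply H.
      + apply (u_bwd L G2 G1); auto. intros X Z; apply H. }
  cbv beta iota delta [equiv]. rewrite K. unfold same_htset.
  split; split; intros H X Y; specialize (H X Y);
    rewrite ?CKu, ?EKu in *; auto.
Qed.

End SP5.

Theorem mainTheorem4 (A : Type) (L : aset A) (G1 G2 : theory A)
  (H1 : theory_over L G1) (H2 : theory_over L G2) (e : ekind) :
  (equiv e L G1 G2 <-> same_htset (Cset e L G1) (Cset e L G2)) /\
  (equiv e L G1 G2 <-> same_htset (Eset e L G1) (Eset e L G2)).
Proof.
  destruct e.
  - apply case_c.
  - apply case_a.
  - apply case_s; auto.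
  - apply case_u; auto.
Qed.
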